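(* Let $n\ge3$, $k\ge0$, let $R$ be a maximal reversible set in $G_n^k$ which is not a canonical reversible set, and let $x_1,\dots,x_{k+1}$ be a consistent labeling of $A(R)$. Let $i$ be the least positive integer with $|B(x_i,R)|\neq k+2-i$. Then: (1) $2\le i\le k-n+2$; (2) $|B(x_i,R)|=k+4-i-n$; (3) for every $j\in\{i+1,\dots,k+1\}$, $|B(x_j,R)|\le k+3-i-n$.
   Context: For integers $n\ge3$, $k\ge0$, the crown $S_n^k$ is the poset with ground set $A\cup B$, $A=\{a_1,\dots,a_{n+k}\}$, $B=\{b_1,\dots,b_{n+k}\}$, indices cyclic modulo $n+k$; elements of $A$ are pairwise incomparable, as are elements of $B$, and $a_i$ is incomparable to $b_j$ when $j\in\{i,\dots,i+k\}$ (mod $n+k$), while $a_i<b_j$ otherwise. $\mathrm{Inc}(A,B)$ is the set of pairs $(a,b)\in A\times B$ with $a$ incomparable to $b$; $G_n^k$ has vertex set $\mathrm{Inc}(A,B)$, with $(a,b)$ adjacent to $(x,y)$ iff $a<y$ and $x<b$. A set $R\subseteq\mathrm{Inc}(A,B)$ is reversible if some linear extension $L$ of $S_n^k$ has $b<a$ in $L$ for all $(a,b)\in R$; maximal reversible means maximal under inclusion among reversible sets. For $R\subseteq\mathrm{Inc}(A,B)$ and $a\in A$, $B(a,R)=\{b:(a,b)\in R\}$ and $A(R)=\{a: B(a,R)\ne\emptyset\}$. For maximal reversible $R$, $|A(R)|=k+1$ and the sets $B(a,R)$ form a chain under inclusion; a consistent labeling of $A(R)$ is a labeling $A(R)=\{x_1,\dots,x_{k+1}\}$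 with $B(x_\beta,R)\subseteq B(x_\alpha,R)$ whenever $\alpha<\beta$. A subset of $A$ is contiguous if it is a block of cyclically consecutive elements; a sequence $\sigma=(x_1,\dots,x_r)$ of distinct elements of $A$ is $h$-contiguous if each $\{x_1,\dots,x_i\}$ is contiguous. $T(\sigma)$ contains every $(x_1,b)\in\mathrm{Inc}(A,B)$, and for $1\le i<r$ contains $(x_{i+1},b)$ iff $(x_{i+1},b)\in\mathrm{Inc}(A,B)$ and $(x_i,b)\in T(\sigma)$. A canonical reversible set is $T(\sigma)$ for an $h$-contiguous $\sigma$ of length $k+1$. *)

(* Defs.v *)
From mathcomp Require Import all_boot.
Set Implicit Arguments. Unset Strict Implicit. Unset Printing Implicit Defensive.

(* Crown S_n^k: indices in 'I_(n+k); a_i is encoded by i (side A), b_j by j (side B).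
   Ground set of the poset: 'I_(n+k) + 'I_(n+k)  (inl i = a_i, inr j = b_j). *)
Section Crown.
Variables n k : nat.
Local Notation N := (n + k).
Local Notation I := ('I_N).

Definition inc (a b : I) : bool := ((b + N - a) %% N <= k).

Definition crown_lt (x y : I + I) : bool :=
  match x, y with
  | inl a, inr b => ~~ inc a b
  | _, _ => false
  end.

Definition linext (f : I + I -> nat) : Prop :=
  injective f /\ forall x y, crown_lt x y -> f x < f y.

Definition Inc : {set I * I} := [set p | inc p.1 p.2].

Definition reversible (R : {set I * I}) : Prop :=
  R \subset Inc /\
  exists f, linext f /\ forall p, p \in R -> f (inr p.2) < f (inl p.1).

Definition max_reversible (R : {set I * I}) : Prop :=
  reversible R /\ forall R', reversible R' -> R \subset R' -> R' = R.

Definition Bof (a : I) (R : {set I * I}) : {set I} := [set b | (a, b) \in R].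
Definition Aof (R : {set I * I}) : {set I} := [set a | Bof a R != set0].

(* consistent labeling x_1..x_{k+1}, x_t is x (t-1) *)
Definition consistent_labeling (R : {set I * I}) (x : 'I_k.+1 -> I) : Prop :=
  injective x /\ [set x t | t in 'I_k.+1] = Aof R /\
  forall al be : 'I_k.+1, al < be -> Bof (x be) R \subset Bof (x al) R.

Definition contiguous (S : {set I}) : Prop :=
  exists (s : I) (l : nat), l <= N /\
    S = [set a : I | [exists t : 'I_N, (t < l) && (val a == (s + t) %% N)]].

Definition h_contiguous (sigma : seq I) : Prop :=
  uniq sigma /\
  forall i, 1 <= i <= size sigma -> contiguous [set a in take i sigma].

(* T(sigma): Bprev is the set of b with (previous element, b) in T *)
Fixpoint Trec (Bprev : {set I}) (s : seq I) : {set I * I} :=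
  match s with
  | [::] => set0
  | a :: s' =>
      let Ba := [set b in Bprev | inc a b] in
      [set p | (p.1 == a) && (p.2 \in Ba)] :|: Trec Ba s'
  end.

Definition Tsig (sigma : seq I) : {set I * I} := Trec setT sigma.

Definition canonical (R : {set I * I}) : Prop :=
  exists sigma, size sigma = k.+1 /\ h_contiguous sigma /\ R = Tsig sigma.

End Crown.

(* Main.v *)
From mathcomp Require Import all_boot zify.
Require Import Defs.
Set Implicit Arguments. Unset Strict Implicit. Unset Printing Implicit Defensive.

Lemma card_count M (P : pred nat) : #|[set j : 'I_M | P j]| = count P (iota 0 M).
Proof.
rewrite cardE /enum_mem size_filter -enumT -val_enum_ord count_map.
by apply: eq_count => j; rewrite /= inE.
Qed.

Lemma count_range lo hi M : count (fun j => lo <= j <= hi) (iota 0 M) = minn M hi.+1 - lo.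
Proof.
elim: M => [|M IH]; first by rewrite /= min0n.
rewrite -addn1 iotaD count_cat IH /= add0n addn0.
case: (boolP (lo <= M <= hi)) => /= H; lia.
Qed.

Lemma count_lt t M : count (fun j => j < t) (iota 0 M) = minn M t.
Proof.
elim: M => [|M IH]; first by rewrite /= min0n.
rewrite -addn1 iotaD count_cat IH /= add0n addn0.
case: (boolP (M < t)) => /= H; lia.
Qed.

Lemma mono_count M (g : 'I_M -> nat) (mono : forall i j : 'I_M, i <= j -> g j <= g i) v (i : 'I_M) :
  (v <= g i) = (i < #|[set j | v <= g j]|).
Proof.
apply/idP/idP => H.
- have S : [set j : 'I_M | j < i.+1] \subset [set j | v <= g j].
    apply/subsetP => j; rewrite !inE => Hj; have Hm := mono j i ltac:(lia); lia.
  move: (subset_leq_card S); rewrite (card_count _ (fun j => j < i.+1)) count_lt.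
  have := ltn_ord i; lia.
- apply/negPn/negP => H2.
  have S : [set j | v <= g j] \subset [set j : 'I_M | j < i].
    apply/subsetP => j; rewrite !inE => Hj; case: (ltnP j i) => // Hij.
    move: (mono _ _ Hij) => Hm; lia.
  move: (subset_leq_card S); rewrite (card_count _ (fun j => j < i)) count_lt.
  have := ltn_ord i; lia.
Qed.

Ltac splitif := repeat (match goal with
 | H : context[if _ then _ else _] |- _ => move: H
 | |- context[if _ then _ else _] => case: ifP => ?
 end); intros.

Section Crown.
Variables n k : nat.
Hypothesis n3 : 3 <= n.
Local Notation N := (n + k).
Local Notation I := 'I_(n + k).

Lemma N_gt0 : 0 < N. Proof. lia. Qed.

Definition dst (x y : nat) := (y + N - x) %% N.

Lemma dstE x y : x < N -> y < N -> dst x y = if x <= y then y - x else y + N - x.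
Proof.
move=> Hx Hy; rewrite /dst; case: ifP => H.
- have -> : y + N - x = (y - x) + N by lia.
  by rewrite modnDr modn_small //; lia.
- by rewrite modn_small //; lia.
Qed.

Lemma dst_lt x y : dst x y < N.
Proof. exact: ltn_pmod N_gt0. Qed.

Lemma dst_shift u a b : u < N -> a < N -> b < N -> dst (dst u a) (dst u b) = dst a b.
Proof.
move=> Hu Ha Hb; rewrite (dstE (dst_lt _ _) (dst_lt _ _)) !dstE //.
splitif; lia.
Qed.

Lemma dst_inj u a b : u < N -> a < N -> b < N -> dst u a = dst u b -> a = b.
Proof. move=> Hu Ha Hb; rewrite !dstE //; splitif; lia. Qed.

Lemma dst_pos u d : u < N -> d < N -> dst u ((u + d) %% N) = d.
Proof.
move=> Hu Hd; rewrite (dstE Hu (ltn_pmod _ N_gt0)).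
case: (ltnP (u + d) N) => H.
- rewrite modn_small //; splitif; lia.
- have -> : u + d = (u + d - N) + N by lia.
  rewrite modnDr modn_small; last lia.
  splitif; lia.
Qed.

Definition off (u a : I) := dst u a.

Lemma off_lt u a : off u a < N. Proof. exact: dst_lt. Qed.

Lemma off_inj u : injective (off u).
Proof. by move=> a b /dst_inj H; apply: val_inj; apply: H. Qed.

Definition posO (u : I) (d : nat) : I := Ordinal (ltn_pmod (u + d) N_gt0).

Lemma off_pos u d : d < N -> off u (posO u d) = d.
Proof. by move=> Hd; rewrite /off /posO /= dst_pos. Qed.

Lemma incP u (a b : I) : inc a b =
  (if off u a <= off u b then off u b - off u a <= k else off u b + n <= off u a).
Proof.
rewrite /inc -[X in X <= k]/(dst a b) -(dst_shift (ltn_ord u) (ltn_ord a) (ltn_ord b)).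
rewrite -/(off u a) -/(off u b) dstE ?off_lt //.
case: ifP => // H; apply/idP/idP; lia.
Qed.


Lemma mulM_neq M x y r : 0 < r < M -> M * x != M * y + r.
Proof.
move=> Hr; apply/eqP => E.
have H1 : M * y < M * x by lia.
have H2 : M * x < M * y.+1 by rewrite mulnS; lia.
rewrite ltn_pmul2l in H1; last lia.
rewrite ltn_pmul2l in H2; last lia.
lia.
Qed.

Lemma mulM_inj M x y r s : r < M -> s < M -> M * x + r = M * y + s -> x = y /\ r = s.
Proof.
move=> Hr Hs E; case: (ltngtP x y) => H.
- have : M * x.+1 <= M * y by rewrite leq_pmul2l //; lia.
  rewrite mulnS; lia.
- have : M * y.+1 <= M * x by rewrite leq_pmul2l //; lia.
  rewrite mulnS; lia.
- subst; split => //; lia.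
Qed.

Definition Rf (h : I -> nat) : {set I * I} :=
  [set p | [forall a', (h p.1 <= h a') ==> inc a' p.2]].

Lemma Rf_rev h : injective h -> reversible (Rf h).
Proof.
move=> hinj; split.
  apply/subsetP => p; rewrite !inE => /forallP /(_ p.1); by rewrite leqnn.
pose mx b := \max_(a' | ~~ inc a' b) (h a').+1.
pose g z := match z with inl a => N.+1 * (h a).+1 | inr b => N.+1 * mx b + (val b).+1 end.
exists g; split; first split.
- case=> [a|b] [a'|b'] /=.
  + move/eqP; rewrite eqn_pmul2l // eqSS => /eqP /hinj -> //.
  + move=> E; move: (mulM_neq (h a).+1 (mx b') (r := (val b').+1) (M := N.+1)).
    by rewrite E eqxx /= ltnS ltn_ord => /(_ isT).
  + move=> E; move: (mulM_neq (h a').+1 (mx b) (r := (val b).+1) (M := N.+1)).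
    by rewrite E eqxx /= ltnS ltn_ord => /(_ isT).
  + move/mulM_inj => [] //; try by rewrite ltnS ltn_ord.
    by move=> _ [] /val_inj ->.
- case=> [a|b] [a'|b'] //= Hlt.
  have : N.+1 * (h a).+1 <= N.+1 * mx b' by rewrite leq_pmul2l //; exact: leq_bigmax_cond.
  lia.
- case=> a b; rewrite inE /= => /forallP H.
  have Hm : mx b <= h a.
    apply/bigmax_leqP => a' Ha'; rewrite ltnNge; apply/negP => Hle.
    by move: (H a'); rewrite Hle /= (negbTE Ha').
  have : N.+1 * mx b <= N.+1 * h a by rewrite leq_pmul2l.
  rewrite mulnS; have := ltn_ord b; lia.
Qed.

Lemma rev_sub R : reversible R -> exists h : I -> nat, injective h /\ R \subset Rf h.
Proof.
move=> [RI [f [[finj fext] frev]]].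
exists (fun a => f (inl a)); split.
  by move=> a b /finj [].
apply/subsetP => p Hp; rewrite inE; apply/forallP => a'; apply/implyP => Hle.
apply/negPn/negP => Hn.
have := fext (inl a') (inr p.2); rewrite /= Hn => /(_ isT) H1.
have := frev p Hp; move: Hle => /= Hle; lia.
Qed.


Lemma count_or (P1 P2 : pred nat) s : (forall j, ~~ (P1 j && P2 j)) ->
  count (fun j => P1 j || P2 j) s = count P1 s + count P2 s.
Proof.
move=> H; elim: s => //= x s IH; rewrite IH; have := H x.
case: (P1 x); case: (P2 x) => //= _; lia.
Qed.

Lemma count_range2 lo e M : count (fun j => (lo <= j) && (j + n <= e)) (iota 0 M) = minn M (e.+1 - n) - lo.
Proof.
elim: M => [|M IH]; first by rewrite /= min0n.
rewrite -addn1 iotaD count_cat IH /= add0n addn0.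
case: (boolP ((lo <= M) && (M + n <= e))) => /= H; lia.
Qed.

Definition V (u : I) m := [set a | off u a < m].

Definition Bs (S : {set I}) := [set b : I | [forall a in S, inc a b]].

Lemma Bs_anti (S S' : {set I}) : S \subset S' -> Bs S' \subset Bs S.
Proof.
move=> /subsetP H; apply/subsetP => b; rewrite !inE => /forallP Hb.
apply/forallP => a; apply/implyP => Ha; exact: (implyP (Hb a) (H a Ha)).
Qed.

Lemma Bs_U1 (S : {set I}) y : Bs (S :|: [set y]) = Bs S :&: [set b | inc y b].
Proof.
apply/setP => b; rewrite !inE; apply/forallP/andP => [H|[/forallP H1 H2] a].
- split; last by move: (H y); rewrite !inE eqxx orbT.
  by apply/forallP => a; apply/implyP => Ha; move: (H a); rewrite !inE Ha.
- rewrite !inE; case: (eqVneq a y) => [->|_]; rewrite ?orbT // orbF; exact: H1.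
Qed.

Lemma Bs_V u m b : 1 <= m <= N -> (b \in Bs (V u m)) = (m.-1 <= off u b <= k).
Proof.
move=> Hm; rewrite inE; have Hb := off_lt u b.
apply/forallP/idP => [H|Hb' a].
- have H0 : inc (posO u 0) b.
    by apply: (implyP (H _)); rewrite inE off_pos; lia.
  rewrite (incP u) off_pos ?leq0n ?subn0 in H0; last lia.
  case: (leqP m.-1 (off u b)) => Hβ; last first.
    have H1 : inc (posO u (off u b).+1) b.
      by apply: (implyP (H _)); rewrite inE off_pos; lia.
    rewrite (incP u) off_pos in H1; last lia.
    move: H1; splitif; lia.
  lia.
- apply/implyP; rewrite inE => Ha; rewrite (incP u); splitif; lia.
Qed.

Lemma Bs_Vy u m y b : 1 <= m <= N -> m <= off u y ->
  (b \in Bs (V u m :|: [set y])) =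
  (m.-1 <= off u b <= k) && ((off u y <= off u b) || (off u b + n <= off u y)).
Proof.
move=> Hm Hy; rewrite Bs_U1 in_setI Bs_V // inE (incP u).
have := off_lt u b; have := off_lt u y; splitif; lia.
Qed.

Definition offO u b : I := Ordinal (off_lt u b).

Lemma card_off u (P : pred nat) : #|[set b : I | P (off u b)]| = count P (iota 0 N).
Proof.
have -> : [set b | P (off u b)] = offO u @^-1: [set j : I | P j] by apply/setP => b; rewrite !inE.
rewrite card_preimset; first exact: (card_count N P).
by move=> a b /(congr1 val) /= /off_inj.
Qed.

Lemma card_BsV u m : 1 <= m <= N -> #|Bs (V u m)| = k.+2 - m.
Proof.
move=> Hm.
have -> : Bs (V u m) = [set b | (fun j => m.-1 <= j <= k) (off u b)].
  by apply/setP => b; rewrite Bs_V // inE.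
rewrite (card_off u (fun j => m.-1 <= j <= k)) count_range; lia.
Qed.

Lemma card_BsVy u m y : 1 <= m <= N -> m <= off u y ->
  #|Bs (V u m :|: [set y])| = (k.+1 - off u y) + (minn N ((off u y).+1 - n) - m.-1).
Proof.
move=> Hm Hy; have Hy' := off_lt u y.
have -> : Bs (V u m :|: [set y]) = [set b | (fun j => (off u y <= j <= k) ||
      ((m.-1 <= j) && (j + n <= off u y))) (off u b)].
  apply/setP => b; rewrite Bs_Vy // inE; have := off_lt u b; lia.
rewrite (card_off u (fun j => (off u y <= j <= k) || ((m.-1 <= j) && (j + n <= off u y)))).
rewrite count_or ?count_range ?count_range2; first lia.
move=> j; lia.
Qed.

Section Rank.
Variable h : I -> nat.
Hypothesis hinj : injective h.

Definition rk (a : I) := #|[set a' | h a < h a']|.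

Lemma rk_le a a' : (rk a' <= rk a) = (h a <= h a').
Proof.
case: (leqP (h a) (h a')) => H.
- apply: subset_leq_card; apply/subsetP => z; rewrite !inE => Hz; lia.
- apply/negbTE; rewrite -ltnNge; apply: proper_card; apply/properP; split.
  + apply/subsetP => z; rewrite !inE => Hz; lia.
  + by exists a; rewrite !inE ?ltnn.
Qed.

Lemma rk_lt a : rk a < N.
Proof.
rewrite /rk; apply: (@leq_ltn_trans #|[set~ a]|).
  apply: subset_leq_card; apply/subsetP => z; rewrite !inE.
  by apply: contraTneq => ->; rewrite ltnn.
rewrite cardsC1 card_ord; lia.
Qed.

Lemma rk_inj : injective rk.
Proof.
move=> a a' E; apply: hinj; apply/eqP; rewrite eqn_leq -rk_le -rk_le E leqnn //.
Qed.

Definition rO a : I := Ordinal (rk_lt a).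
Lemma rO_inj : injective rO.
Proof. by move=> a b /(congr1 val) /= /rk_inj. Qed.

Definition T t := [set a | rk a < t].

Lemma card_T t : t <= N -> #|T t| = t.
Proof.
move=> Ht.
have -> : T t = rO @^-1: [set j : I | j < t] by apply/setP => a; rewrite !inE.
rewrite card_preimset; last exact: rO_inj.
rewrite (card_count _ (fun j => j < t)) count_lt; lia.
Qed.

Definition a0 : I := Ordinal N_gt0.
Definition q j : I := odflt a0 [pick a | rk a == j].

Lemma rk_q j : j < N -> rk (q j) = j.
Proof.
move=> Hj; rewrite /q; case: pickP => [a /eqP //|none].
pose jo : I := Ordinal Hj.
have : 0 < #|rO @^-1: [set jo]| by rewrite card_preimset ?cards1 //; exact: rO_inj.
case/card_gt0P => a; rewrite !inE => /eqP /(congr1 val) /= E.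
by move: (none a); rewrite /= E eqxx.
Qed.

Lemma T_S t : t < N -> T t.+1 = T t :|: [set q t].
Proof.
move=> Ht; apply/setP => a; rewrite !inE ltnS leq_eqVlt orbC; congr (_ || _).
apply/eqP/eqP => [E|->]; last by rewrite rk_q.
by apply: rk_inj; rewrite rk_q.
Qed.

Lemma T_mono t t' : t <= t' -> T t \subset T t'.
Proof. move=> H; apply/subsetP => a; rewrite !inE => Ha; lia. Qed.

Lemma T0 : T 0 = set0.
Proof. by apply/setP => a; rewrite !inE. Qed.

Lemma Bof_Rf a : Bof a (Rf h) = Bs (T (rk a).+1).
Proof.
apply/setP => b; rewrite !inE /=; apply/forallP/forallP => H a'; move: (H a');
  by rewrite !inE ltnS rk_le.
Qed.

Definition c t := #|Bs (T t)|.

Lemma off_shift u y a : off y a = dst (off u y) (off u a).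
Proof. by rewrite /off dst_shift. Qed.

Lemma off_self u : off u u = 0.
Proof. by rewrite /off (dstE (ltn_ord u) (ltn_ord u)) leqnn subnn. Qed.

Lemma V1 u : V u 1 = [set u].
Proof.
apply/setP => a; rewrite !inE ltnS leqn0; apply/eqP/eqP => [H|->]; last exact: off_self.
by apply: (off_inj (u := u)); rewrite H off_self.
Qed.

Lemma T1 : T 1 = V (q 0) 1.
Proof. rewrite T_S; last lia. by rewrite T0 set0U V1. Qed.

Lemma VS u m y : off u y = m -> V u m :|: [set y] = V u m.+1.
Proof.
move=> Hy; apply/setP => a; rewrite !inE; case: (eqVneq a y) => [->|Hay]; rewrite ?orbT ?orbF.
  by rewrite Hy ltnSn.
have Hne : off u a != m.
  by apply/eqP => E; case/eqP: Hay; apply: (off_inj (u := u)); rewrite E Hy.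
move: Hne; lia.
Qed.

Lemma VSl u m y : m < N -> off u y = N.-1 -> V u m :|: [set y] = V y m.+1.
Proof.
move=> Hm Hy; apply/setP => a; rewrite !inE (off_shift u y a) Hy.
case: (eqVneq a y) => [->|Hay]; rewrite ?orbT ?orbF.
  by rewrite Hy dstE; [rewrite leqnn subnn|lia|lia].
have Ha := off_lt u a.
have Hne : off u a != N.-1.
  by apply/eqP => E; case/eqP: Hay; apply: (off_inj (u := u)); rewrite E Hy.
rewrite dstE; [|lia|lia]; splitif; lia.
Qed.

Lemma y_off u m : m < N -> T m = V u m -> m <= off u (q m).
Proof.
move=> Hm HV; have : q m \notin T m by rewrite inE rk_q // ltnn.
by rewrite HV inE -leqNgt.
Qed.

Lemma c_step u m : 1 <= m < N -> T m = V u m ->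
  c m.+1 = (k.+1 - off u (q m)) + (minn N ((off u (q m)).+1 - n) - m.-1).
Proof.
move=> Hm HV; rewrite /c T_S; last lia.
rewrite HV card_BsVy //; [lia|]; apply: y_off; [lia|done].
Qed.

Lemma T_interval t : 1 <= t <= k.+1 -> (forall j, 1 <= j <= t -> c j = k.+2 - j) ->
  exists u, T t = V u t.
Proof.
elim: t => [//|t IH] Ht Hc.
case: (posnP t) => [->|tpos]; first by exists (q 0); exact: T1.
have [u Hu] := IH ltac:(lia) (fun j Hj => Hc j ltac:(lia)).
have Hy : t <= off u (q t) by apply: y_off => //; lia.
have Hc' := Hc t.+1 ltac:(lia).
rewrite (c_step (u := u)) // in Hc'; last lia.
have Hlt := off_lt u (q t).
have : off u (q t) = t \/ off u (q t) = N.-1 by lia.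
case=> He.
- by exists u; rewrite T_S ?Hu ?(VS He) //; lia.
- by exists (q t); rewrite T_S ?Hu ?(VSl _ He) //; lia.
Qed.

Lemma mulM_lt M x z r : 0 < r -> M * x + r <= M * z -> x < z.
Proof.
move=> Hr H; case: (posnP M) => [M0|Mpos]; first by subst; rewrite !mul0n in H; lia.
by rewrite -(ltn_pmul2l Mpos); lia.
Qed.

Lemma mulM_le M x z r : r < M -> M * z <= M * x + r -> z <= x.
Proof.
move=> Hr H; have Mpos : 0 < M by lia.
have : M * z < M * x.+1 by rewrite mulnS; lia.
by rewrite ltn_pmul2l.
Qed.

Section Ext.
Hypothesis Hmax : forall h', injective h' -> Rf h \subset Rf h' -> Rf h' = Rf h.
Variables (u : I) (m : nat).
Hypothesis Hm : 1 <= m <= k.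
Hypothesis HV : T m = V u m.
Local Notation y := (q m).

Lemma mN : m < N. Proof. lia. Qed.

Lemma inV a : h y < h a -> off u a < m.
Proof.
move=> H; have : a \in T m.
  by rewrite inE; have := rk_le a y; rewrite (rk_q mN); lia.
by rewrite HV inE.
Qed.

Lemma Vhi a : off u a < m -> h y < h a.
Proof.
move=> H; have : a \in T m by rewrite HV inE.
by rewrite inE => Hr; have := rk_le a y; rewrite (rk_q mN); lia.
Qed.

Lemma inRf_cond a b : (a, b) \in Rf h -> h a <= h y -> b \in Bs (V u m :|: [set y]).
Proof.
rewrite inE => /forallP H Ha; rewrite inE; apply/forallP => a'; apply/implyP.
rewrite !inE => Ha'; apply: (implyP (H a')) => /=.
case/orP: Ha' => [/Vhi|/eqP ->]; lia.
Qed.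

Variables (L : pred I) (rho : I -> nat).
Hypothesis HL : forall a, L a -> m <= off u a.
Hypothesis Hrho : forall a, L a -> 0 < rho a < N.+1.
Hypothesis Hrinj : {in L &, injective rho}.
Hypothesis HLinc : forall b, b \in Bs (V u m :|: [set y]) -> forall a', L a' -> inc a' b.

Definition h' a := if L a then N.+1 * h y + rho a else N.+1 * h a.

Lemma h'_inj : injective h'.
Proof.
move=> a b; rewrite /h'; case: (boolP (L a)) => La; case: (boolP (L b)) => Lb.
- by move/addnI; apply: Hrinj.
- move=> E; have := mulM_neq (h b) (h y) (Hrho La); by rewrite E eqxx.
- move=> E; have := mulM_neq (h a) (h y) (Hrho Lb); by rewrite E eqxx.
- by move/eqP; rewrite eqn_pmul2l // => /eqP /hinj.
Qed.

Lemma Rf_sub : Rf h \subset Rf h'.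
Proof.
apply/subsetP => -[a b] Hp; have Hp' := Hp; rewrite inE in Hp'; move/forallP: Hp' => Hp'.
rewrite inE; apply/forallP => a' /=; apply/implyP => Hle.
case: (ltnP (h y) (h a)) => Hya.
- have La : ~~ L a by apply/negP => /HL; have := inV Hya; lia.
  rewrite /h' (negbTE La) in Hle.
  case: (boolP (L a')) => La'; rewrite ?La' ?(negbTE La') in Hle.
  + have := mulM_le (proj2 (andP (Hrho La'))) Hle; lia.
  + apply: (implyP (Hp' a')); by rewrite /= -(leq_pmul2l (ltn0Sn N)).
- have Hb := inRf_cond Hp Hya.
  case: (boolP (L a')) => La'; first exact: HLinc _ Hb _ La'.
  apply: (implyP (Hp' a')) => /=; rewrite /h' (negbTE La') in Hle.
  case: (boolP (L a)) => La; rewrite ?La ?(negbTE La) in Hle.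
  + have := mulM_lt (proj1 (andP (Hrho La))) Hle; lia.
  + by rewrite -(leq_pmul2l (ltn0Sn N)).
Qed.

Lemma Rf'_mem a0 b0 : L a0 -> (forall a', L a' -> rho a0 <= rho a' -> inc a' b0) ->
  (forall a', off u a' < m -> inc a' b0) -> (a0, b0) \in Rf h'.
Proof.
move=> La0 H1 H2; rewrite inE; apply/forallP => a'; apply/implyP => /= Hle.
rewrite /h' La0 in Hle.
case: (boolP (L a')) => La'; rewrite ?La' ?(negbTE La') in Hle.
- apply: H1 => //; lia.
- apply: H2; apply: inV; exact: mulM_lt (proj1 (andP (Hrho La0))) Hle.
Qed.

Lemma ext_false a0 b0 : L a0 -> (forall a', L a' -> rho a0 <= rho a' -> inc a' b0) ->
  (forall a', off u a' < m -> inc a' b0) -> (a0, b0) \notin Rf h -> False.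
Proof.
move=> La0 H1 H2; have E := Hmax h'_inj Rf_sub.
by rewrite -E Rf'_mem.
Qed.

End Ext.

Section Key.
Hypothesis Hmax : forall h', injective h' -> Rf h \subset Rf h' -> Rf h' = Rf h.
Variables (u : I) (m : nat).
Hypothesis Hm : 1 <= m <= k.
Hypothesis HV : T m = V u m.
Local Notation y := (q m).
Local Notation e := (off u (q m)).

Lemma e_ge : m <= e.
Proof. by apply: y_off => //; lia. Qed.

Lemma hle_notV a : m <= off u a -> h a <= h y.
Proof. move=> H; rewrite leqNgt; apply/negP => /(inV Hm HV); lia. Qed.

Lemma no_L1 : m < e -> e + 2 <= m + n -> False.
Proof.
move=> H1 H2; have He := off_lt u y.
pose L := fun a : I => (m <= off u a) && (off u a < e).
pose rho := fun a : I => N - off u a.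
apply: (@ext_false Hmax u m Hm HV L rho _ _ _ _ (posO u m) (posO u m)).
- by move=> a /andP[].
- move=> a /andP [Ha1 Ha2]; have := off_lt u a; rewrite /rho; lia.
- move=> a b _ _ /= E; apply: (off_inj (u:=u)); have := off_lt u a; have := off_lt u b.
  rewrite /rho in E; lia.
- move=> b Hb a' /andP [H3 H4]; rewrite Bs_Vy in Hb; [|lia|exact: e_ge].
  rewrite (incP u); have := off_lt u b; move: Hb; splitif; lia.
- rewrite /L off_pos; lia.
- move=> a' /andP [H3 H4]; rewrite /rho off_pos; [|lia] => H5.
  rewrite (incP u) off_pos; [|lia]; splitif; lia.
- move=> a' Ha'; rewrite (incP u) off_pos; [|lia]; splitif; lia.
- apply/negP => Hin.
  have Hle : h (posO u m) <= h y by apply: hle_notV; rewrite off_pos; lia.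
  have := inRf_cond Hm HV Hin Hle.
  rewrite Bs_Vy ?off_pos; [lia|lia|lia|exact: e_ge].
Qed.

Lemma no_L2 : k < e -> e < N.-1 -> False.
Proof.
move=> H1 H2; have He := off_lt u y.
pose L := fun a : I => e < off u a.
pose rho := fun a : I => off u a - e.
apply: (@ext_false Hmax u m Hm HV L rho _ _ _ _ (posO u N.-1) (posO u k.-1)).
- move=> a; rewrite /L; lia.
- move=> a Ha; have := off_lt u a; rewrite /rho /L in Ha *; lia.
- move=> a b Ha Hb /= E; apply: (off_inj (u:=u)); rewrite /rho /L in E Ha Hb; lia.
- move=> b Hb a' H3; rewrite Bs_Vy in Hb; [|lia|exact: e_ge].
  rewrite /L in H3; rewrite (incP u); have := off_lt u b; have := off_lt u a'; move: Hb; splitif; lia.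
- rewrite /L off_pos; lia.
- move=> a' H3; rewrite /rho /L off_pos in H3 *; [|lia] => H5.
  have := off_lt u a'.
  rewrite (incP u) off_pos; [|lia]; splitif; lia.
- move=> a' Ha'; rewrite (incP u) off_pos; [|lia]; splitif; lia.
- apply/negP => Hin.
  have Hle : h (posO u N.-1) <= h y by apply: hle_notV; rewrite off_pos; lia.
  have := inRf_cond Hm HV Hin Hle.
  rewrite Bs_Vy ?off_pos; [lia|lia|lia|exact: e_ge].
Qed.

Lemma key_bounds : c m.+1 != k.+1 - m -> (m + n.-1 <= e <= k) /\ c m.+1 = k + 3 - n - m.
Proof.
move=> Hc; have He := off_lt u y; have He2 := e_ge.
rewrite (c_step (u := u)) // in Hc *; last lia.
have H1 : m < e by case: (ltngtP m e) Hc => //; [lia|move=> <-; lia].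
have H2 : e < N.-1.
  case: (ltngtP e N.-1) Hc => //; [lia|move=> ->; lia].
have H3 : m + n.-1 <= e by case: (leqP (m + n.-1) e) => // H; exfalso; apply: no_L1; lia.
have H4 : e <= k by case: (leqP e k) => // H; exfalso; apply: no_L2; lia.
split; lia.
Qed.

Lemma c_strict : m + n.-1 <= e <= k -> c m.+2 < c m.+1.
Proof.
move=> Hb; have He := off_lt u y.
rewrite /c; apply: proper_card.
rewrite (T_S (t := m.+1)); last lia.
set z := q m.+1.
have Hz : m <= off u z.
  have : z \notin T m by rewrite inE rk_q; lia.
  by rewrite HV inE -leqNgt.
have Hzy : off u z != e.
  apply/eqP => /off_inj E; have := congr1 rk E; rewrite !rk_q; lia.
have Hze := off_lt u z.
pose beta := if off u z < e then maxn m.-1 (off u z + 1 - n) else minn k (off u z).-1.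
have Hbeta : beta < N by rewrite /beta; case: ifP; lia.
apply/properP; split; first by apply: Bs_anti; apply/subsetP => a; rewrite !inE => ->.
exists (posO u beta).
- rewrite T_S; last lia.
  rewrite HV Bs_Vy ?off_pos //; [|lia|exact: e_ge].
  rewrite /beta; case: ifP; lia.
- rewrite Bs_U1 inE negb_and; apply/orP; right; rewrite inE (incP u) off_pos //.
  rewrite /beta; case: ifP; splitif; lia.
Qed.

End Key.

Lemma Trec_mem (Bp : {set I}) s a b :
  (a, b) \in Trec Bp s <->
  b \in Bp /\ exists t, [/\ t < size s, nth a s t = a & all (fun c => inc c b) (take t.+1 s)].
Proof.
elim: s Bp => [|c s IH] Bp /=.
  by rewrite inE; split => // -[_ [t []]].
rewrite in_setU; split.
- case/orP => [|/IH [Hb' [t [Ht Hn Ha]]]].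
    rewrite inE /= => /andP [/eqP ->]; rewrite inE => /andP [Hb Hc].
    split => //; exists 0; split => //=; by rewrite Hc take0.
  move: Hb'; rewrite inE => /andP [Hb Hc]; split => //.
  by exists t.+1; split => //=; rewrite Hc.
- move=> [Hb [[|t] [Ht /= Hn Ha]]].
    move: Ha => /andP [Hc _]; apply/orP; left.
    by rewrite !inE /= -Hn eqxx Hb Hc.
  move: Ha => /andP [Hc Ha]; apply/orP; right; apply/IH; split; first by rewrite inE Hb Hc.
  by exists t.
Qed.

Lemma q_rk a : q (rk a) = a.
Proof. by apply: rk_inj; rewrite rk_q // rk_lt. Qed.

Lemma all_q t b : t <= N -> all (fun c => inc c b) (map q (iota 0 t)) = (b \in Bs (T t)).
Proof.
move=> Ht; rewrite all_map inE; apply/allP/forallP => [H a|H j].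
- apply/implyP; rewrite inE => Ha.
  by have := H (rk a); rewrite mem_iota /= q_rk; apply; lia.
- rewrite mem_iota /= => Hj; have := H (q j); rewrite inE rk_q; last lia.
  by move/implyP; apply; lia.
Qed.

Lemma pos_off u a : posO u (off u a) = a.
Proof. by apply: (off_inj (u := u)); rewrite off_pos // off_lt. Qed.

Lemma V_contig u t : t <= N -> contiguous (V u t).
Proof.
move=> Ht; exists u, t; split => //; apply/setP => a; rewrite !inE.
apply/idP/existsP => [H|[t' /andP [H1 /eqP H2]]].
- exists (offO u a); rewrite /= H /=; apply/eqP.
  by have := congr1 val (pos_off u a).
- have -> : a = posO u t' by apply: val_inj; rewrite /= H2.
  by rewrite off_pos.
Qed.

Lemma canon_of : (forall j, 1 <= j <= k.+1 -> c j = k.+2 - j) -> canonical (Rf h).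
Proof.
move=> Hc.
have HT : forall t, 1 <= t <= k.+1 -> exists u, T t = V u t.
  move=> t Ht; apply: T_interval => // j Hj; apply: Hc; lia.
pose sigma := map q (iota 0 k.+1).
have Htake : forall t, t <= k.+1 -> take t sigma = map q (iota 0 t).
  by move=> t Ht; rewrite /sigma -map_take take_iota; congr (map _ (iota _ _)); lia.
exists sigma; split; first by rewrite size_map size_iota.
split; first split.
- rewrite map_inj_in_uniq ?iota_uniq // => i j; rewrite !mem_iota /= => Hi Hj E.
  by have := congr1 rk E; rewrite !rk_q //; lia.
- move=> t; rewrite size_map size_iota => Ht.
  have -> : [set a in take t sigma] = T t.
    apply/setP => a; rewrite !inE Htake; last lia.
    apply/mapP/idP => [[j Hj ->]|Ha].
      by move: Hj; rewrite mem_iota => Hj; rewrite rk_q; lia.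
    by exists (rk a); rewrite ?q_rk // mem_iota; lia.
  have [u Hu] := HT t Ht; rewrite Hu; apply: V_contig; lia.
- have [u Hu] := HT k.+1 ltac:(lia).
  have Hc2 : c k.+2 = 0.
    rewrite (c_step (u := u)) //; last lia.
    have := off_lt u (q k.+1); have : k.+1 <= off u (q k.+1) by apply: y_off => //; lia.
    lia.
  have E2 : Bs (T k.+2) = set0 by apply: cards0_eq.
  apply/setP => -[a b]; apply/idP/idP => H.
  + have Hb : b \in Bs (T (rk a).+1) by rewrite -Bof_Rf inE.
    apply/Trec_mem; split; first by rewrite inE.
    have Hra : rk a < k.+1.
      rewrite ltnNge; apply/negP => Hr.
      have : b \in Bs (T k.+2) by apply: (subsetP (Bs_anti (T_mono _)) _ Hb).
      by rewrite E2 inE.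
    exists (rk a); split; first by rewrite size_map size_iota.
      by rewrite (nth_map 0) ?size_iota // nth_iota // q_rk.
    by rewrite Htake // all_q // rk_lt.
  + move/Trec_mem: H => [_ [t [Ht Hn Ha]]].
    move: Ht Hn; rewrite size_map size_iota => Ht.
    rewrite (nth_map 0) ?size_iota // nth_iota // add0n => Hq.
    rewrite Htake // all_q in Ha; last lia.
    have : b \in Bof a (Rf h) by rewrite Bof_Rf -Hq rk_q //; lia.
    by rewrite inE.
Qed.

Lemma transfer (x : 'I_k.+1 -> I) : consistent_labeling (Rf h) x ->
  forall al : 'I_k.+1, #|Bof (x al) (Rf h)| = c al.+1.
Proof.
move=> [xinj [ximg xchain]] al.
pose gs (b : 'I_k.+1) := #|Bof (x b) (Rf h)|.
pose gc (j : I) := c j.+1.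
have gs_mono : forall i j : 'I_k.+1, i <= j -> gs j <= gs i.
  move=> i j; rewrite leq_eqVlt; case/orP => [/eqP /val_inj -> //|Hij].
  exact: subset_leq_card (xchain _ _ Hij).
have gc_mono : forall i j : I, i <= j -> gc j <= gc i.
  by move=> i j Hij; apply: subset_leq_card; apply: Bs_anti; apply: T_mono.
pose S v := [set a : I | v <= #|Bof a (Rf h)|].
have HS1 : forall v, 0 < v -> #|[set b | v <= gs b]| = #|S v|.
  move=> v Hv; have -> : S v = x @: [set b | v <= gs b].
    apply/setP => a; apply/idP/imsetP => [Ha|[b]].
      have : a \in Aof (Rf h).
        rewrite inE; move: Ha; rewrite inE => Ha.
        by apply/set0Pn; apply/card_gt0P; lia.
      rewrite -ximg => /imsetP [b _ Hb]; exists b => //; rewrite inE /gs -Hb.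
      by move: Ha; rewrite inE.
    by rewrite !inE => Hb ->.
  by rewrite card_imset.
have HS2 : forall v, #|[set j | v <= gc j]| = #|S v|.
  move=> v; have -> : S v = rO @^-1: [set j | v <= gc j].
    by apply/setP => a; rewrite !inE /gc /= /c Bof_Rf.
  by rewrite card_preimset //; exact: rO_inj.
have HkN : k.+1 <= N by lia.
pose al' : I := widen_ord HkN al.
have Hv : forall v, (v <= gs al) = (v <= gc al').
  case=> [//|v].
  by rewrite (mono_count gs_mono) (mono_count gc_mono) HS1 // HS2.
have H1 := Hv (gs al); have H2 := Hv (gc al').
rewrite leqnn in H1; rewrite leqnn in H2.
rewrite /gs /gc /= in H1 H2.
apply/eqP; rewrite eqn_leq; apply/andP; split; [exact: (esym H1)|exact: H2].
Qed.

End Rank.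

End Crown.

Theorem lemma3p2 (n k : nat) (R : {set 'I_(n + k) * 'I_(n + k)})
  (x : 'I_k.+1 -> 'I_(n + k)) :
  3 <= n ->
  max_reversible R ->
  ~ canonical R ->
  consistent_labeling R x ->
  let xl := fun i : nat => x (inord i.-1) in
  exists i : nat,
    (1 <= i <= k.+1) /\
    #|Bof (xl i) R| != k + 2 - i /\
    (forall j, 1 <= j < i -> #|Bof (xl j) R| = k + 2 - j) /\
    (2 <= i /\ i + n <= k + 2) /\
    #|Bof (xl i) R| + i + n = k + 4 /\
    (forall j, i + 1 <= j <= k + 1 -> #|Bof (xl j) R| + i + n <= k + 3).
Proof.
move=> n3 [Rrev Rmax] Hncan Hlab xl.
have [h [hinj Hsub]] := rev_sub n3 Rrev.
have ER : Rf h = R := Rmax _ (Rf_rev n3 hinj) Hsub.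
subst R.
have Hmax : forall h', injective h' -> Rf h \subset Rf h' -> Rf h' = Rf h.
  by move=> h' hi' Hs; exact: Rmax _ (Rf_rev n3 hi') Hs.
have Hsz : forall j, 1 <= j <= k.+1 -> #|Bof (xl j) (Rf h)| = c h j.
  move=> j Hj; rewrite /xl (transfer n3 hinj Hlab) inordK; last lia.
  congr c; lia.
have Hc1 : c h 1 = k.+1 by rewrite /c (T1 n3 hinj) card_BsV //; lia.
have Hex : exists j, (1 <= j <= k.+1) && (c h j != k.+2 - j).
  suff : [exists j : 'I_k.+2, (1 <= j) && (c h j != k.+2 - j)].
    case/existsP => j /andP [H1 H2]; exists j; rewrite H1 H2 /=; have := ltn_ord j; lia.
  case: (boolP [exists j : 'I_k.+2, (1 <= j) && (c h j != k.+2 - j)]) => // /existsPn H.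
  exfalso; apply: Hncan; apply: (canon_of n3 hinj) => j Hj.
  have Hjk : j < k.+2 by lia.
  have := H (Ordinal Hjk); rewrite /= negb_and negbK; case/orP; lia.
case: (ex_minnP Hex) => i /andP [Hi Hci] Hmin.
have Hlt : forall j, 1 <= j < i -> c h j = k.+2 - j.
  move=> j Hj; case: (eqVneq (c h j) (k.+2 - j)) => // Hne.
  have := Hmin j; rewrite Hne andbT => /(_ ltac:(lia)); lia.
have i2 : 2 <= i.
  case: (eqVneq i 1) => [Ei|Ni]; last lia.
  by move: Hci; rewrite Ei Hc1; lia.
have Ei : i = i.-1.+1 by lia.
set m := i.-1 in Ei.
have [u Hu] : exists u, T h m = V u m.
  apply: (T_interval n3 hinj); first lia.
  move=> j Hj; apply: Hlt; lia.
have Hcm : c h m.+1 != k.+1 - m by rewrite -Ei; move: Hci; lia.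
have [Hb Hci'] := key_bounds n3 hinj Hmax (m := m) ltac:(lia) Hu Hcm.
have Hs := c_strict hinj (m := m) ltac:(lia) Hu Hb.
have Hmono : forall j, m.+2 <= j -> c h j <= c h m.+2.
  by move=> j Hj; apply: subset_leq_card; apply: Bs_anti; apply: T_mono.
exists i; split; first done.
split; first by rewrite Hsz //; move: Hci; lia.
split; first by move=> j Hj; rewrite Hsz; [have := Hlt j ltac:(lia); lia|lia].
split; first by move: Hb; lia.
split; first by rewrite Hsz // Ei Hci'; move: Hb; lia.
move=> j Hj; rewrite Hsz; last lia.
have := Hmono j ltac:(lia); rewrite Ei; move: Hb Hci'; lia.
Qed.
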